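(* Let $R$ be a Noetherian ring and let $E^\bullet$ be a bounded-above complex of $R$-modules such that $H^i(E^\bullet)$ is a finitely generated $R$-module for every $i$. Let $F^\bullet$ be a bounded-above complex of finitely generated free $R$-modules together with a quasi-isomorphism $\phi:F^\bullet\to E^\bullet$ (such $F^\bullet$ always exists). Define $$J^i_k(E^\bullet)=I_{\operatorname{rank}(F^i)-k+1}(d^{i-1}\oplus d^i),$$ where $d^{i-1}:F^{i-1}\to F^i$ and $d^i:F^i\to F^{i+1}$ are the differentials of $F^\bullet$, $d^{i-1}\oplus d^i:F^{i-1}\oplus F^i\to F^i\oplus F^{i+1}$, and $I_r(\cdot)$ denotes the ideal of $R$ generated by the $r\times r$ minors of a matrix representing the map. Then the ideal $J^i_k(E^\bullet)$ does not depend on the choice of $F^\bullet$ and $\phi$.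
   Context: Convention for determinantal ideals: $I_r(\cdot)=R$ for $r\le 0$, and $I_r(\cdot)=0$ if $r$ exceeds the size of the matrix. The ideals $J^i_k(E^\bullet)$ are called the cohomology jump ideals of $E^\bullet$. *)

(* Defs.v *)
From HB Require Import structures.
From mathcomp Require Import all_boot all_order all_algebra.
Set Implicit Arguments. Unset Strict Implicit. Unset Printing Implicit Defensive.
Import Order.TTheory GRing.Theory Num.Theory.
Local Open Scope ring_scope.

Section Defs.
Variable R : comNzRingType.

Definition is_ideal (I : R -> Prop) : Prop :=
  [/\ I 0, (forall x y, I x -> I y -> I (x + y)) & (forall a x, I x -> I (a * x))].

Definition in_span (s : seq R) (x : R) : Prop :=
  exists c : 'I_(size s) -> R, x = \sum_(j < size s) c j * s`_j.

Definition noetherian : Prop :=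
  forall I : R -> Prop, is_ideal I ->
    exists s : seq R, forall x, I x <-> in_span s x.

(* I_r(A): ideal generated by the r x r minors of A, with I_r = R for r <= 0
   and I_r = 0 if r exceeds the size of the matrix *)
Definition minor_ideal (r : int) (m n : nat) (A : 'M[R]_(m, n)) (x : R) : Prop :=
  if r <= 0 then True
  else if (minn m n < `|r|)%N then x = 0
  else exists (k : nat) (c : 'I_k -> R)
              (f : 'I_k -> 'I_`|r| -> 'I_m) (g : 'I_k -> 'I_`|r| -> 'I_n),
         x = \sum_(j < k) c j * \det (mxsub (f j) (g j) A).

Definition is_complex (M : int -> lmodType R)
    (d : forall i : int, {linear M i -> M (i + 1)}) : Prop :=
  forall i (x : M i), d (i + 1) (d i x) = 0.

Definition bounded_above (M : int -> lmodType R) : Prop :=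
  exists N : int, forall i : int, N < i -> forall x : M i, x = 0.

Definition cocycle (M : int -> lmodType R)
    (d : forall i : int, {linear M i -> M (i + 1)}) (i : int) (x : M i) : Prop :=
  d i x = 0.

Definition coboundary (M : int -> lmodType R)
    (d : forall i : int, {linear M i -> M (i + 1)}) (i : int) (x : M i) : Prop :=
  exists (j : int) (e : j + 1 = i) (y : M j),
    x = eq_rect (j + 1) (fun t => (M t : Type)) (d j y) i e.

Definition fg_cohomology (M : int -> lmodType R)
    (d : forall i : int, {linear M i -> M (i + 1)}) (i : int) : Prop :=
  exists s : seq (M i), (forall z, z \in s -> cocycle d z) /\
    forall z : M i, cocycle d z ->
      exists c : 'I_(size s) -> R,
        coboundary d (z - \sum_(j < size s) c j *: s`_j).

Definition chain_map (M N : int -> lmodType R)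
    (dM : forall i : int, {linear M i -> M (i + 1)})
    (dN : forall i : int, {linear N i -> N (i + 1)})
    (phi : forall i : int, {linear M i -> N i}) : Prop :=
  forall i (x : M i), phi (i + 1) (dM i x) = dN i (phi i x).

Definition quasi_iso (M N : int -> lmodType R)
    (dM : forall i : int, {linear M i -> M (i + 1)})
    (dN : forall i : int, {linear N i -> N (i + 1)})
    (phi : forall i : int, {linear M i -> N i}) : Prop :=
  [/\ chain_map dM dN phi,
      (forall i (z : N i), cocycle dN z ->
         exists x : M i, cocycle dM x /\ coboundary dN (z - phi i x))
    & (forall i (x : M i), cocycle dM x -> coboundary dN (phi i x) ->
         coboundary dM x)].

(* A complex of finitely generated free modules F^i = R^(n i) (row vectors),
   with differential d^i : F^i -> F^(i+1), v |-> v *m D i. *)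
Definition free_mod (n : int -> nat) (i : int) : lmodType R := 'rV[R]_(n i).

Definition free_diff (n : int -> nat) (D : forall i : int, 'M[R]_(n i, n (i + 1)))
  (i : int) : {linear free_mod n i -> free_mod n (i + 1)} := mulmxr (D i).

Definition sum_diff (n : int -> nat) (D : forall i : int, 'M[R]_(n i, n (i + 1)))
  (i : int) := block_mx (D (i - 1)) 0 0 (D i).

Definition jump_ideal (n : int -> nat) (D : forall i : int, 'M[R]_(n i, n (i + 1)))
  (i k : int) : R -> Prop :=
  minor_ideal ((n i)%:Z - k + 1) (sum_diff D i).

End Defs.

(* Submission.v *)
Require Import Defs.
From HB Require Import structures.
From mathcomp Require Import all_boot all_order all_algebra all_fingroup zify ring.
Set Implicit Arguments. Unset Strict Implicit. Unset Printing Implicit Defensive.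
Import Order.TTheory GRing.Theory Num.Theory.
Local Open Scope ring_scope.

Module M1.

Section MS.
Variable R : comNzRingType.

Definition mspan (s : nat) m n (A : 'M[R]_(m, n)) (x : R) : Prop :=
  exists (k : nat) (c : 'I_k -> R)
              (f : 'I_k -> 'I_s -> 'I_m) (g : 'I_k -> 'I_s -> 'I_n),
         x = \sum_(j < k) c j * \det (mxsub (f j) (g j) A).

Lemma mspan0 s m n (A : 'M[R]_(m, n)) : mspan s A 0.
Proof.
have f0 T : 'I_0 -> T by case.
by exists 0%N, (fun _ => 0), (f0 _), (f0 _); rewrite big_ord0.
Qed.

Lemma mspan_minor s m n (A : 'M[R]_(m, n)) (f : 'I_s -> 'I_m) (g : 'I_s -> 'I_n) : mspan s A (\det (mxsub f g A)).
Proof.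
exists 1%N, (fun _ => 1), (fun _ => f), (fun _ => g).
by rewrite big_ord1 mul1r.
Qed.

Lemma mspanD s m n (A : 'M[R]_(m, n)) x y : mspan s A x -> mspan s A y -> mspan s A (x + y).
Proof.
move=> [k1 [c1 [f1 [g1 ->]]]] [k2 [c2 [f2 [g2 ->]]]].
exists (k1 + k2)%N, (fun j => match split j with inl a => c1 a | inr b => c2 b end),
  (fun j => match split j with inl a => f1 a | inr b => f2 b end),
  (fun j => match split j with inl a => g1 a | inr b => g2 b end).
rewrite big_split_ord /=; congr (_ + _); apply: eq_bigr => j _.
  by rewrite (unsplitK (inl _)).
by rewrite (unsplitK (inr _)).
Qed.

Lemma mspanM s m n (A : 'M[R]_(m, n)) a x : mspan s A x -> mspan s A (a * x).
Proof.
move=> [k [c [f [g ->]]]]; exists k, (fun j => a * c j), f, g.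
rewrite big_distrr; apply: eq_bigr => j _ /=. by rewrite mulrA.
Qed.

Lemma mspan_sum s m n (A : 'M[R]_(m, n)) (I : finType) (F : I -> R) :
  (forall i, mspan s A (F i)) -> mspan s A (\sum_i F i).
Proof.
move=> H; apply: (big_ind (mspan s A)) => //; first exact: mspan0.
exact: mspanD.
Qed.

Lemma mspan_sumP s m n (A : 'M[R]_(m, n)) (I : finType) (P : pred I) (F : I -> R) :
  (forall i, P i -> mspan s A (F i)) -> mspan s A (\sum_(i | P i) F i).
Proof.
move=> H; apply: (big_ind (mspan s A)) => //; first exact: mspan0.
exact: mspanD.
Qed.

Lemma mspan_trans s s' m n m' n' (A : 'M[R]_(m, n)) (B : 'M[R]_(m', n')) x :
  mspan s A x -> (forall (f : 'I_s -> 'I_m) (g : 'I_s -> 'I_n), mspan s' B (\det (mxsub f g A))) -> mspan s' B x.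
Proof.
move=> [k [c [f [g ->]]]] H; apply: mspan_sum => j; apply: mspanM; exact: H.
Qed.

Lemma det_mul_expand r p (U : 'M[R]_(r, p)) (V : 'M[R]_(p, r)) :
  \det (U *m V) = \sum_(f : {ffun 'I_r -> 'I_p}) (\prod_i U i (f i)) * \det (rowsub f V).
Proof.
rewrite /determinant.
pose AB (s : 'S_r) i j := U i j * V j (s i).
transitivity (\sum_(f : {ffun 'I_r -> 'I_p}) \sum_(s : 'S_r) (-1) ^+ s * \prod_i AB s i (f i)).
  rewrite exchange_big; apply: eq_bigr => /= s _; rewrite -big_distrr /=.
  congr (_ * _); rewrite -(bigA_distr_bigA (AB s)) /=.
  by apply: eq_bigr => x _; rewrite mxE.
apply: eq_bigr => f _; rewrite big_distrr /=; apply: eq_bigr => s _.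
rewrite /AB big_split /= mulrCA; congr (_ * (_ * _)).
by apply: eq_bigr => i _; rewrite mxE.
Qed.

Lemma det_mul_mspan_r r p q (U : 'M[R]_(r, p)) (A : 'M[R]_(p, q)) (W : 'M[R]_(q, r)) :
  mspan r A (\det (U *m (A *m W))).
Proof.
rewrite det_mul_expand; apply: mspan_sum => f; apply: mspanM.
rewrite -mul_rowsub_mx -det_tr trmx_mul det_mul_expand.
apply: mspan_sum => h; apply: mspanM.
suff -> : rowsub h (rowsub f A)^T = (mxsub f h A)^T by rewrite det_tr; apply: mspan_minor.
by apply/matrixP => i j; rewrite !mxE.
Qed.

Lemma mspan_mul s m n m' n' (X : 'M[R]_(m', m)) (A : 'M[R]_(m, n)) (Y : 'M[R]_(n, n')) x :
  mspan s (X *m A *m Y) x -> mspan s A x.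
Proof.
move=> H; apply: (mspan_trans H) => f g.
by rewrite mxsub_mul -mul_rowsub_mx -mulmxA; apply: det_mul_mspan_r.
Qed.

End MS.

End M1.
Import M1.

Module M2.

Section MS2.
Variable R : comNzRingType.

Lemma colexp s m n (A : 'M[R]_(m, n)) (f : 'I_s.+1 -> 'I_m) (g : 'I_s.+1 -> 'I_n) j0 :
  \det (mxsub f g A) = \sum_i (A (f i) (g j0) *
     ((-1) ^+ (i + j0) * \det (mxsub (f \o lift i) (g \o lift j0) A))).
Proof.
rewrite (expand_det_col _ j0); apply: eq_bigr => i _; rewrite mxE /cofactor.
congr (_ * (_ * \det _)); apply/matrixP => k l; rewrite !mxE //.
Qed.

Lemma mspan_mono s m n (A : 'M[R]_(m, n)) x : mspan s.+1 A x -> mspan s A x.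
Proof.
move=> H; apply: (mspan_trans H) => f g; rewrite (colexp _ _ _ ord0).
by apply: mspan_sum => i; apply: mspanM; apply: mspanM; apply: mspan_minor.
Qed.

Lemma mspan_monoD s d m n (A : 'M[R]_(m, n)) x : mspan (s + d) A x -> mspan s A x.
Proof.
elim: d => [|d IH]; first by rewrite addn0.
by rewrite addnS => /mspan_mono.
Qed.

Lemma mspan_le s s' m n (A : 'M[R]_(m, n)) x : (s <= s')%N -> mspan s' A x -> mspan s A x.
Proof. by move/subnKC <-; apply: mspan_monoD. Qed.

Lemma det_rowsub_noninj s m n (A : 'M[R]_(m, n)) (f : 'I_s -> 'I_m) (g : 'I_s -> 'I_n) :
  ~~ injectiveb f -> \det (mxsub f g A) = 0.
Proof.
move=> /injectivePn [i1 [i2 ne e]]; apply: (determinant_alternate ne) => j.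
by rewrite !mxE e.
Qed.

Lemma det_colsub_noninj s m n (A : 'M[R]_(m, n)) (f : 'I_s -> 'I_m) (g : 'I_s -> 'I_n) :
  ~~ injectiveb g -> \det (mxsub f g A) = 0.
Proof.
move=> /injectivePn [i1 [i2 ne e]]; rewrite -det_tr.
apply: (determinant_alternate ne) => j; by rewrite !mxE e.
Qed.

Lemma det_minor_big s m n (A : 'M[R]_(m, n)) (f : 'I_s -> 'I_m) (g : 'I_s -> 'I_n) :
  (minn m n < s)%N -> \det (mxsub f g A) = 0.
Proof.
rewrite gtn_min => /orP [] H.
  apply: det_rowsub_noninj; apply/negP => /injectiveP inj.
  by have := leq_card _ inj; rewrite !card_ord leqNgt H.
apply: det_colsub_noninj; apply/negP => /injectiveP inj.
by have := leq_card _ inj; rewrite !card_ord leqNgt H.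
Qed.

Lemma mspan_big s m n (A : 'M[R]_(m, n)) x : (minn m n < s)%N -> mspan s A x -> x = 0.
Proof.
move=> H [k [c [f [g ->]]]]; apply: big1 => j _.
by rewrite det_minor_big // mulr0.
Qed.

Definition MI (r : int) m n (A : 'M[R]_(m, n)) (x : R) : Prop := (r <= 0) \/ mspan `|r| A x.

Lemma minor_idealE r m n (A : 'M[R]_(m, n)) x : minor_ideal r A x <-> MI r A x.
Proof.
rewrite /minor_ideal /MI; case: ifP => Hr.
  by split => // _; left.
split.
  case: ifP => Hb; last by move=> H; right.
  by move=> ->; right; apply: mspan0.
case => [//|H]; case: ifP => Hb //.
exact: mspan_big H.
Qed.

Lemma MI_mul r m n m' n' (X : 'M[R]_(m', m)) (A : 'M[R]_(m, n)) (Y : 'M[R]_(n, n')) x :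
  MI r (X *m A *m Y) x -> MI r A x.
Proof. by case=> [H|H]; [left|right; apply: mspan_mul H]. Qed.

End MS2.

End M2.
Import M2.

Module M3.

Section MS3.
Variable R : comNzRingType.

Lemma ord_split m1 m2 (i : 'I_(m1 + m2)) :
  (exists k, i = lshift m2 k /\ (i < m1)%N) \/ (exists k, i = rshift m1 k /\ (m1 <= i)%N).
Proof.
case: (splitP i) => [k e|k e]; [left|right]; exists k; split.
- by apply: val_inj; exact: e.
- by rewrite ?e ?ltn_ord.
- by apply: val_inj; exact: e.
- by rewrite e leq_addr.
Qed.

Variables (a b m : nat) (A : 'M[R]_(a, b)).
Let M := block_mx A 0 0 (1%:M : 'M[R]_m).

Definition tc s (g : 'I_s -> 'I_(b + m)) : nat := \sum_(j < s) ((b <= g j)%N : nat).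

Lemma det_zero_row s (N : 'M[R]_s) i : (forall j, N i j = 0) -> \det N = 0.
Proof.
move=> H; rewrite (expand_det_row _ i) big1 // => j _; by rewrite H mul0r.
Qed.

Lemma key_id s : forall (f : 'I_s -> 'I_(a + m)) (g : 'I_s -> 'I_(b + m)),
  mspan (s - tc g) A (\det (mxsub f g M)).
Proof.
elim: s => [|s IH] f g.
  rewrite sub0n det_mx00.
  have f0 : 'I_0 -> 'I_a by case.
  have g0 : 'I_0 -> 'I_b by case.
  by have := mspan_minor A f0 g0; rewrite det_mx00.
case: (pickP (fun j => b <= g j)%N) => [j0 Hj0|Hn].
  rewrite (colexp _ _ _ j0).
  have -> : (s.+1 - tc g = s - tc (g \o lift j0))%N.
    by rewrite /tc (bigD1_ord j0) //= Hj0 add1n subSS.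
  apply: mspan_sum => i; apply: mspanM; apply: mspanM; exact: IH.
have tc0 : tc g = 0%N by rewrite /tc big1 // => j _; rewrite Hn.
rewrite tc0 subn0.
have Hg j : exists k, g j = lshift m k.
  case: (ord_split (g j)) => [[k [e _]]|[k [_ Hk]]]; first by exists k.
  by have := Hn j; rewrite /= Hk.
case: (pickP (fun i => a <= f i)%N) => [i0 Hi0|Hf].
  rewrite (det_zero_row (i := i0)); first by apply: mspan0.
  move=> j; rewrite mxE; case: (Hg j) => k ->.
  case: (ord_split (f i0)) => [[l [_ Hl]]|[l [-> _]]]; first by move: Hi0; rewrite leqNgt Hl.
  by rewrite /M block_mxEdl mxE.
have fa : (f ord0 < a)%N by rewrite ltnNge Hf.
have gb : (g ord0 < b)%N by rewrite ltnNge Hn.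
pose f' i : 'I_a := insubd (Ordinal fa) (val (f i)).
pose g' j : 'I_b := insubd (Ordinal gb) (val (g j)).
suff -> : mxsub f g M = mxsub f' g' A by apply: mspan_minor.
apply/matrixP => i j; rewrite mxE [RHS]mxE.
have -> : f i = lshift m (f' i).
  by apply: val_inj; rewrite /= val_insubd ltnNge Hf.
have -> : g j = lshift m (g' j).
  by apply: val_inj; rewrite /= val_insubd ltnNge Hn.
by rewrite /M block_mxEul.
Qed.

Lemma tc_le s (g : 'I_s -> 'I_(b + m)) : injective g -> (tc g <= m)%N.
Proof.
move=> inj.
have -> : tc g = #|[set j | (b <= g j)%N]|.
  rewrite /tc -sum1_card [RHS]big_mkcond /=; apply: eq_bigr => j _; rewrite inE.
  by case: (b <= g j)%N.
rewrite -(card_imset _ inj).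
apply: (@leq_trans #|[set rshift b k | k : 'I_m]|); last first.
  by rewrite card_imset ?card_ord //; apply: rshift_inj.
apply: subset_leq_card; apply/subsetP => c /imsetP [j]; rewrite inE => Hj ->.
case: (ord_split (g j)) => [[k [e Hk]]|[k [e _]]]; first by move: Hj; rewrite leqNgt Hk.
by rewrite e; apply: imset_f.
Qed.

Lemma MI_id_sub (r : int) x : MI (r + m%:Z) M x -> MI r A x.
Proof.
case: (lerP r 0) => Hr; first by left.
case => [H|H]; first by left; rewrite (le_trans _ H) // lerDl.
right; move: H.
have [r' Er] : exists r' : nat, r = r'%:Z by exists `|r|%N; rewrite gtz0_abs.
subst r; rewrite [X in mspan X]/absz /= => H.
apply: (mspan_trans H) => f g.
case: (boolP (injectiveb g)) => [/injectiveP inj|ninj]; last first.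
  by rewrite det_colsub_noninj //; apply: mspan0.
apply: (mspan_le _ (key_id f g)).
by rewrite -addnBA ?tc_le // leq_addr.
Qed.

End MS3.

Section MS4.
Variable R : comNzRingType.

Lemma split_lsh m n (i : 'I_m) : split (lshift n i) = inl i.
Proof. exact: (unsplitK (inl i)). Qed.
Lemma split_rsh m n (i : 'I_n) : split (rshift m i) = inr i.
Proof. exact: (unsplitK (inr i)). Qed.

Definition sumf s1 s2 t (f1 : 'I_s1 -> 'I_t) (f2 : 'I_s2 -> 'I_t) (k : 'I_(s1 + s2)) : 'I_t :=
  match split k with inl i => f1 i | inr j => f2 j end.

Lemma mxsub_block a b c d s1 s2 t1 t2 (A : 'M[R]_(a, b)) (B : 'M[R]_(a, d)) (C : 'M[R]_(c, b))
   (D : 'M[R]_(c, d)) (f1 : 'I_s1 -> 'I_a) (f2 : 'I_s2 -> 'I_c) (g1 : 'I_t1 -> 'I_b) (g2 : 'I_t2 -> 'I_d) :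
  mxsub (sumf (lshift c \o f1) (@rshift a _ \o f2)) (sumf (lshift d \o g1) (@rshift b _ \o g2)) (block_mx A B C D)
  = block_mx (mxsub f1 g1 A) (mxsub f1 g2 B) (mxsub f2 g1 C) (mxsub f2 g2 D).
Proof.
apply/matrixP => k l; rewrite mxE /sumf.
case: (ord_split k) => [[k' [-> _]]|[k' [-> _]]];
case: (ord_split l) => [[l' [-> _]]|[l' [-> _]]];
  by rewrite ?split_lsh ?split_rsh /= ?block_mxEul ?block_mxEur ?block_mxEdl ?block_mxEdr !mxE.
Qed.

Lemma mxsub0 m n m' n' (f : 'I_m' -> 'I_m) (g : 'I_n' -> 'I_n) : mxsub f g (0 : 'M[R]_(m, n)) = 0.
Proof. by apply/matrixP => i j; rewrite !mxE. Qed.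

Lemma MI_id_sup a b m (A : 'M[R]_(a, b)) (r : int) x :
  MI r A x -> MI (r + m%:Z) (block_mx A 0 0 (1%:M : 'M[R]_m)) x.
Proof.
case: (lerP (r + m%:Z) 0) => Hrm; first by left.
case: (lerP r 0) => Hr.
  move=> _; right.
  have Hle : (absz (r + m%:Z)%R <= m)%N.
    by lia.
  pose w (k : 'I_`|r + m%:Z|) : 'I_m := widen_ord Hle k.
  have -> : x = x * \det (mxsub (@rshift a _ \o w) (@rshift b _ \o w) (block_mx A 0 0 (1%:M : 'M[R]_m))).
    suff -> : mxsub (@rshift a _ \o w) (@rshift b _ \o w) (block_mx A 0 0 (1%:M : 'M[R]_m)) = 1%:M.
      by rewrite det1 mulr1.
    apply/matrixP => k l; rewrite !mxE /= split_rsh /= !mxE /w.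
    rewrite split_rsh !mxE; rewrite (_ : (widen_ord Hle k == widen_ord Hle l) = (k == l)) //.
  by apply: mspanM; apply: mspan_minor.
case => [|H]; first by rewrite leNgt Hr.
right.
have [r' Er] : exists r' : nat, r = r'%:Z by exists `|r|%N; rewrite gtz0_abs.
subst r; move: H => /= H.
apply: (mspan_trans H) => f g.
pose F := sumf (lshift m \o f) (@rshift a _ \o (@id 'I_m)).
pose G := sumf (lshift m \o g) (@rshift b _ \o (@id 'I_m)).
have -> : \det (mxsub f g A) = \det (mxsub F G (block_mx A 0 0 (1%:M : 'M[R]_m))).
  rewrite mxsub_block !mxsub0 det_ublock.
  have -> : mxsub id id (1%:M : 'M[R]_m) = 1%:M by apply/matrixP => i j; rewrite !mxE.
  by rewrite det1 mulr1.
exact: mspan_minor.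
Qed.

End MS4.

End M3.
Import M3.

Module M4.

Ltac bsimp := repeat progress rewrite ?mulmx_block ?mul_col_row ?mul_row_col ?mul_mx_row ?mul_col_mx
  ?mul_row_block ?mul_block_col ?mulmx0 ?mul0mx ?mulmx1 ?mul1mx ?addr0 ?add0r
  ?add_block_mx ?add_row_mx ?add_col_mx ?row_mx0 ?col_mx0 ?block_mx0.

Lemma blk_sum (R : comNzRingType) m1 m2 n1 n2 (A : 'M[R]_(m1, n1)) (D : 'M[R]_(m2, n2)) :
  col_mx (row_mx A 0) 0 + row_mx 0 (col_mx 0 D) = block_mx A 0 0 D.
Proof.
apply/matrixP => i j; case: (ord_split i) => [[i' [-> _]]|[i' [-> _]]];
  case: (ord_split j) => [[j' [-> _]]|[j' [-> _]]];
  rewrite [LHS]mxE ?col_mxEu ?col_mxEd ?row_mxEl ?row_mxEr ?block_mxEul ?block_mxEur ?block_mxEdl ?block_mxEdr ?col_mxEu ?col_mxEd ?row_mxEl ?row_mxEr ?mxE ?addr0 ?add0r //.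
Qed.

Section MS5.
Variable R : comNzRingType.

Lemma MI_mulE r m n m' n' (X : 'M[R]_(m', m)) (A : 'M[R]_(m, n)) (Y : 'M[R]_(n, n')) B x :
  X *m A *m Y = B -> MI r B x -> MI r A x.
Proof. by move=> <-; apply: MI_mul. Qed.

Lemma MI_iso a b c a' b' c' (al : 'M[R]_(a, b)) (be : 'M[R]_(b, c))
  (al' : 'M[R]_(a', b')) (be' : 'M[R]_(b', c'))
  (P0 : 'M[R]_(a, a')) (P1 : 'M[R]_(b, b')) (P2 : 'M[R]_(c, c'))
  (Q0 : 'M[R]_(a', a)) (Q1 : 'M[R]_(b', b)) (Q2 : 'M[R]_(c', c)) :
  al *m P1 = P0 *m al' -> be *m P2 = P1 *m be' ->
  Q0 *m P0 = 1%:M -> P1 *m Q1 = 1%:M -> Q1 *m P1 = 1%:M -> P2 *m Q2 = 1%:M ->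
  forall r x, MI r (block_mx al 0 0 be) x <-> MI r (block_mx al' 0 0 be') x.
Proof.
move=> H1 H2 E0 E1 E1' E2 r x; split => H.
  apply: (MI_mulE (X := block_mx P0 0 0 P1) (Y := block_mx Q1 0 0 Q2)) H.
  bsimp; rewrite -H1 -H2 -!mulmxA E1 E2 !mulmx1 //.
apply: (MI_mulE (X := block_mx Q0 0 0 Q1) (Y := block_mx P1 0 0 P2)) H.
bsimp; by rewrite -!mulmxA H1 H2 !mulmxA E0 E1' !mul1mx.
Qed.

Lemma MI_contr a b c aK bK cK (al : 'M[R]_(a, b)) (be : 'M[R]_(b, c))
  (alK : 'M[R]_(aK, bK)) (beK : 'M[R]_(bK, cK)) (sK : 'M[R]_(bK, aK)) (tK : 'M[R]_(cK, bK)) :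
  alK *m beK = 0 -> sK *m alK + beK *m tK = 1%:M ->
  forall r x, MI (r + bK%:Z) (block_mx (block_mx al 0 0 alK) 0 0 (block_mx be 0 0 beK)) x <->
     MI r (block_mx al 0 0 be) x.
Proof.
move=> H0 H1 r x.
have E1 : alK *m sK *m alK = alK.
  have : alK *m (sK *m alK + beK *m tK) = alK by rewrite H1 mulmx1.
  by rewrite mulmxDr !mulmxA H0 mul0mx addr0.
have E2 : beK *m tK *m beK = beK.
  have : (sK *m alK + beK *m tK) *m beK = beK by rewrite H1 mul1mx.
  by rewrite mulmxDl -(mulmxA sK) H0 mulmx0 add0r.
have E3 : beK *m tK *m sK *m alK = 0.
  have : beK *m tK *m (sK *m alK + beK *m tK) = beK *m tK by rewrite H1 mulmx1.
  rewrite mulmxDr !mulmxA E2.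
  by move/(congr1 (fun z => z - beK *m tK)); rewrite addrK subrr.
split => H.
  apply: MI_id_sub.
  apply: (MI_mulE (X := block_mx (block_mx 1%:M 0 0 0) (col_mx 0 alK) (block_mx 0 1%:M 0 0) (col_mx 0 (beK *m tK)))
    (Y := block_mx (block_mx 1%:M 0 0 0) (block_mx 0 0 1%:M 0) (row_mx 0 (sK *m alK)) (row_mx 0 beK))) H.
  by bsimp; rewrite !mulmxA E1 H0 E2 E3; bsimp; rewrite !blk_sum.
apply: (MI_mulE (B := block_mx (block_mx al 0 0 be) 0 0 (1%:M : 'M_bK))
   (X := block_mx (block_mx 1%:M 0 0 0) (block_mx 0 0 1%:M 0) (row_mx 0 sK) (row_mx 0 1%:M))
    (Y := block_mx (block_mx 1%:M 0 0 0) (col_mx 0 1%:M) (block_mx 0 1%:M 0 0) (col_mx 0 tK))).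
  by bsimp; rewrite H1 -block_mxEv.
apply: MI_id_sup H.
Qed.

End MS5.

End M4.
Import M4.

Module H0.

Section CB.
Variables (R : comNzRingType) (M : int -> lmodType R) (d : forall i : int, {linear M i -> M (i + 1)}).

Lemma eq_rect0 a b (e : a = b) : eq_rect a (fun t => (M t : Type)) 0 b e = 0.
Proof. by case: b / e. Qed.

Lemma cb_at j (z : M (j + 1)) : coboundary d z -> exists y, z = d j y.
Proof.
move=> [j' [e [y ->]]].
have ej : j' = j by apply: (addIr 1); rewrite e.
subst j'; rewrite (eq_irrelevance e erefl) /=; by exists y.
Qed.

Lemma cb_d j y : coboundary d (d j y).
Proof. by exists j, erefl, y. Qed.

Lemma cb0 i : coboundary d (0 : M i).
Proof.
have e : i - 1 + 1 = i by rewrite subrK.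
by exists (i - 1), e, 0; rewrite linear0 eq_rect0.
Qed.

Lemma cbD i (z1 z2 : M i) : coboundary d z1 -> coboundary d z2 -> coboundary d (z1 + z2).
Proof.
move=> [j1 [e1 [y1 ->]]] [j2 [e2 [y2 ->]]].
have ej : j2 = j1 by apply: (addIr 1); rewrite e1 e2.
subst j2; rewrite (eq_irrelevance e2 e1); clear z1 z2 e2; case: i / e1 => /=.
by exists j1, erefl, (y1 + y2); rewrite linearD.
Qed.

Lemma cbZ i a (z : M i) : coboundary d z -> coboundary d (a *: z).
Proof.
move=> [j [e [y ->]]]; clear z; case: i / e => /=.
by exists j, erefl, (a *: y); rewrite linearZ.
Qed.

Lemma cbN i (z : M i) : coboundary d z -> coboundary d (- z).
Proof. by move=> H; rewrite -scaleN1r; apply: cbZ. Qed.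

Lemma cbB i (z1 z2 : M i) : coboundary d z1 -> coboundary d z2 -> coboundary d (z1 - z2).
Proof. by move=> H1 H2; apply: cbD => //; apply: cbN. Qed.

Lemma cb_sum i (I : finType) (F : I -> M i) : (forall k, coboundary d (F k)) -> coboundary d (\sum_k F k).
Proof. move=> H; apply: (big_ind (fun z : M i => coboundary d z)) => //; [exact: cb0|exact: cbD]. Qed.

End CB.

Section Lin.
Variables (R : comNzRingType).

Definition lin n (W : lmodType R) (v : 'I_n -> W) (x : 'rV[R]_n) : W := \sum_k x 0 k *: v k.

Lemma linD n (W : lmodType R) (v : 'I_n -> W) x y : lin v (x + y) = lin v x + lin v y.
Proof. by rewrite /lin -big_split; apply: eq_bigr => k _; rewrite mxE scalerDl. Qed.

Lemma linZ n (W : lmodType R) (v : 'I_n -> W) a x : lin v (a *: x) = a *: lin v x.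
Proof. by rewrite /lin scaler_sumr; apply: eq_bigr => k _; rewrite mxE scalerA. Qed.

Lemma lin0 n (W : lmodType R) (v : 'I_n -> W) : lin v 0 = 0.
Proof. by rewrite /lin big1 // => k _; rewrite mxE scale0r. Qed.

Lemma lin_delta n (W : lmodType R) (v : 'I_n -> W) k : lin v (delta_mx 0 k) = v k.
Proof.
rewrite /lin (bigD1 k) //= big1 ?addr0 => [|j /negPf jk]; first by rewrite mxE !eqxx scale1r.
by rewrite mxE jk andbF scale0r.
Qed.

Lemma row_ind n (W : lmodType R) (F : 'rV[R]_n -> W) (P : W -> Prop) :
  (forall x y, F (x + y) = F x + F y) -> (forall a x, F (a *: x) = a *: F x) ->
  P 0 -> (forall u v, P u -> P v -> P (u + v)) -> (forall a u, P u -> P (a *: u)) ->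
  (forall k, P (F (delta_mx 0 k))) -> forall x, P (F x).
Proof.
move=> FD FZ P0 PD PZ Pk x.
have F0 : F 0 = 0 by apply: (addIr (F 0)); rewrite -FD !add0r.
rewrite (row_sum_delta x).
elim/big_rec: _ => [|k s _ Ps]; first by rewrite F0.
by rewrite FD FZ; apply: PD => //; apply: PZ.
Qed.

End Lin.

Section IsLin.
Variables (R : comNzRingType).

Definition islin n (W : lmodType R) (F : 'rV[R]_n -> W) :=
  (forall x y, F (x + y) = F x + F y) /\ (forall a x, F (a *: x) = a *: F x).

Lemma islin_linear n (W : lmodType R) (g : {linear 'rV[R]_n -> W}) : islin g.
Proof. by split => *; rewrite ?linearD ?linearZ. Qed.

Lemma islin_mul n m (W : lmodType R) (F : 'rV[R]_m -> W) (A : 'M[R]_(n, m)) :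
  islin F -> islin (fun x => F (x *m A)).
Proof. by case=> H1 H2; split => *; rewrite ?mulmxDl ?H1 // -scalemxAl H2. Qed.

Lemma islin_lin n (W : lmodType R) (v : 'I_n -> W) : islin (lin v).
Proof. by split => *; rewrite ?linD ?linZ. Qed.

Lemma islin_D n (W : lmodType R) (F G : 'rV[R]_n -> W) :
  islin F -> islin G -> islin (fun x => F x + G x).
Proof.
case=> F1 F2 [G1 G2]; split => *; first by rewrite F1 G1 addrACA.
by rewrite F2 G2 scalerDr.
Qed.

Lemma islin_N n (W : lmodType R) (F : 'rV[R]_n -> W) : islin F -> islin (fun x => - F x).
Proof. by case=> F1 F2; split => *; rewrite ?F1 ?F2 ?opprD ?scalerN. Qed.

Lemma islin_B n (W : lmodType R) (F G : 'rV[R]_n -> W) :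
  islin F -> islin G -> islin (fun x => F x - G x).
Proof. by move=> HF HG; apply: islin_D => //; apply: islin_N. Qed.

Lemma islin_comp n (W W' : lmodType R) (g : {linear W -> W'}) (F : 'rV[R]_n -> W) :
  islin F -> islin (fun x => g (F x)).
Proof. by case=> F1 F2; split => *; rewrite ?F1 ?F2 ?linearD ?linearZ. Qed.

Lemma islin_ind n (W : lmodType R) (F : 'rV[R]_n -> W) (P : W -> Prop) :
  islin F -> P 0 -> (forall u v, P u -> P v -> P (u + v)) -> (forall a u, P u -> P (a *: u)) ->
  (forall k, P (F (delta_mx 0 k))) -> forall x, P (F x).
Proof. by case=> F1 F2; apply: row_ind. Qed.

Lemma islin_eq n (W : lmodType R) (F G : 'rV[R]_n -> W) :
  islin F -> islin G -> (forall k, F (delta_mx 0 k) = G (delta_mx 0 k)) -> forall x, F x = G x.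
Proof.
move=> HF HG H x; apply/eqP; rewrite -subr_eq0; apply/eqP.
apply: (islin_ind (F := fun x => F x - G x) (P := fun w => w = 0)) => //.
- exact: islin_B.
- by move=> u v -> ->; rewrite addr0.
- by move=> a u ->; rewrite scaler0.
- by move=> k; rewrite H subrr.
Qed.

End IsLin.

End H0.
Import H0.

Module H1.

Definition upd (T : int -> Type) (g : forall j, T j) (L : int) (v : T L) : forall j, T j :=
  fun j => match L =P j with ReflectT e => eq_rect L T v j e | ReflectF _ => g j end.
Arguments upd {T} g L v j.

Lemma upd_eq (T : int -> Type) (g : forall j, T j) L v : upd g L v L = v.
Proof. by rewrite /upd; case: eqP => // e; rewrite (eq_irrelevance e erefl). Qed.

Lemma upd_neq (T : int -> Type) (g : forall j, T j) L v j : L != j -> upd g L v j = g j.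
Proof. by rewrite /upd; case: eqP. Qed.

Section FreeCx.
Variables (R : comNzRingType) (n : int -> nat) (D : forall i : int, 'M[R]_(n i, n (i + 1))).

Lemma free_diffE i (x : 'rV[R]_(n i)) : free_diff D i x = x *m D i.
Proof. by []. Qed.

Lemma cx_DD : is_complex (free_diff D) -> forall i, D i *m D (i + 1) = 0.
Proof.
move=> H i; apply/row_matrixP => k; rewrite row0 rowE mulmxA.
by have := H i (delta_mx 0 k); rewrite !free_diffE.
Qed.

Lemma rV0_n m : (forall x : 'rV[R]_m, x = 0) -> m = 0%N.
Proof.
case: m => // m H; have := H (delta_mx 0 ord0).
move/matrixP => /(_ 0 ord0); rewrite !mxE !eqxx /= => /eqP; by rewrite oner_eq0.
Qed.

Lemma free_cb_at j (x : 'rV[R]_(n (j + 1))) : coboundary (free_diff D) x -> exists y, x = y *m D j.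
Proof. by move/cb_at => [y ->]; exists y. Qed.

End FreeCx.

Section Lift.
Variables (R : comNzRingType) (E : int -> lmodType R) (dE : forall i : int, {linear E i -> E (i + 1)}).
Hypothesis HEc : is_complex dE.
Variables (n1 : int -> nat) (D1 : forall i : int, 'M[R]_(n1 i, n1 (i + 1))).
Hypothesis HF1c : is_complex (free_diff D1).
Variable phi1 : forall i : int, {linear free_mod R n1 i -> E i}.
Hypothesis Hphi1 : quasi_iso (free_diff D1) dE phi1.
Variables (n2 : int -> nat) (D2 : forall i : int, 'M[R]_(n2 i, n2 (i + 1))).
Hypothesis HF2c : is_complex (free_diff D2).
Variable phi2 : forall i : int, {linear free_mod R n2 i -> E i}.
Hypothesis Hphi2 : quasi_iso (free_diff D2) dE phi2.
Variable N1 : int.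
Hypothesis HN1 : forall i : int, N1 < i -> forall x : free_mod R n1 i, x = 0.

Lemma DD1 i : D1 i *m D1 (i + 1) = 0. Proof. exact: cx_DD. Qed.
Lemma DD2 i : D2 i *m D2 (i + 1) = 0. Proof. exact: cx_DD. Qed.

Lemma chain1 i (x : 'rV[R]_(n1 i)) : phi1 (i + 1) (x *m D1 i) = dE i (phi1 i x).
Proof. by case: Hphi1 => H _ _; apply: H. Qed.
Lemma chain2 i (x : 'rV[R]_(n2 i)) : phi2 (i + 1) (x *m D2 i) = dE i (phi2 i x).
Proof. by case: Hphi2 => H _ _; apply: H. Qed.

Lemma inj1 i (x : 'rV[R]_(n1 (i + 1))) : x *m D1 (i + 1) = 0 ->
  coboundary dE (phi1 (i + 1) x) -> exists y, x = y *m D1 i.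
Proof. by case: Hphi1 => _ _ H Hx Hc; apply: free_cb_at; apply: H. Qed.
Lemma inj2 i (x : 'rV[R]_(n2 (i + 1))) : x *m D2 (i + 1) = 0 ->
  coboundary dE (phi2 (i + 1) x) -> exists y, x = y *m D2 i.
Proof. by case: Hphi2 => _ _ H Hx Hc; apply: free_cb_at; apply: H. Qed.

Lemma surj1 i (z : E i) : dE i z = 0 ->
  exists x : 'rV[R]_(n1 i), x *m D1 i = 0 /\ coboundary dE (z - phi1 i x).
Proof. by case: Hphi1 => _ H _ Hz; apply: H. Qed.
Lemma surj2 i (z : E i) : dE i z = 0 ->
  exists x : 'rV[R]_(n2 i), x *m D2 i = 0 /\ coboundary dE (z - phi2 i x).
Proof. by case: Hphi2 => _ H _ Hz; apply: H. Qed.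

Definition C1 (f : forall j, 'M[R]_(n1 j, n2 j)) j := D1 j *m f (j + 1) = f j *m D2 j.
Definition C2 (f : forall j, 'M[R]_(n1 j, n2 j)) (hv : forall j, 'I_(n1 (j + 1)) -> E j) j :=
  forall x : 'rV[R]_(n1 (j + 1)),
   phi1 (j + 1) x - phi2 (j + 1) (x *m f (j + 1)) = dE j (lin (hv j) x) + lin (hv (j + 1)) (x *m D1 (j + 1)).
Definition Gd (f : forall j, 'M[R]_(n1 j, n2 j)) (hv : forall j, 'I_(n1 (j + 1)) -> E j) L :=
  forall x : 'rV[R]_(n1 L), coboundary dE (phi1 L x - phi2 L (x *m f L) - lin (hv L) (x *m D1 L)).
Definition QL L := exists f hv, (forall j, L <= j -> C1 f j /\ C2 f hv j) /\ Gd f hv L.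

Lemma QL_base L : N1 < L -> QL L.
Proof.
move=> HL; exists (fun j => 0), (fun j k => 0); split.
  move=> j Hj; split; first by rewrite /C1 mulmx0 mul0mx.
  move=> x; have -> : x = 0 by apply: (HN1 (i := j + 1)); rewrite (lt_le_trans HL) // ler_wpDr.
  by rewrite !linear0 mul0mx !lin0 linear0 ?subr0 ?oppr0 ?addr0.
move=> x; have -> : x = 0 by apply: (HN1 (i := L)).
by rewrite !mul0mx !linear0 !lin0 ?subr0 ?oppr0 ?addr0; apply: cb0.
Qed.


Lemma ne_succ (L : int) : L != L + 1.
Proof. by rewrite eq_sym -subr_eq0 addrAC subrr add0r oner_eq0. Qed.

Lemma QL_step L : QL (L + 1) -> QL L.
Proof.
move=> [f [hv [HC HG]]].
have Hex : forall k : 'I_(n1 (L + 1)), exists y : E L,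
   phi1 (L + 1) (delta_mx 0 k) - phi2 (L + 1) (delta_mx 0 k *m f (L + 1))
     - lin (hv (L + 1)) (delta_mx 0 k *m D1 (L + 1)) = dE L y.
  move=> k; exact: (cb_at (HG (delta_mx 0 k))).
have [hvL HhvL] := fin_all_exists Hex.
have C2L : forall x : 'rV[R]_(n1 (L + 1)), phi1 (L + 1) x - phi2 (L + 1) (x *m f (L + 1)) =
    dE L (lin hvL x) + lin (hv (L + 1)) (x *m D1 (L + 1)).
  apply: islin_eq.
  - apply: islin_B; first exact: islin_linear.
    exact: (islin_mul _ (islin_linear _)).
  - apply: islin_D; first exact: (islin_comp _ (islin_lin _)).
    exact: (islin_mul _ (islin_lin _)).
  - move=> k; rewrite lin_delta -HhvL.
    by rewrite subrK.
have Hrows : forall k : 'I_(n1 L), exists x : 'rV[R]_(n2 L),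
   delta_mx 0 k *m D1 L *m f (L + 1) = x *m D2 L /\
   coboundary dE (phi1 L (delta_mx 0 k) - phi2 L x - lin hvL (delta_mx 0 k *m D1 L)).
  move=> k; set e := (delta_mx 0 k : 'rV[R]_(n1 L)).
  set y := e *m D1 L *m f (L + 1).
  have HC1 : C1 f (L + 1) by case: (HC (L + 1) (lexx _)).
  have Hy : y *m D2 (L + 1) = 0.
    by rewrite /y -mulmxA -HC1 !mulmxA -(mulmxA e) DD1 mulmx0 !mul0mx.
  have Hpy : phi2 (L + 1) y = dE L (phi1 L e - lin hvL (e *m D1 L)).
    have := C2L (e *m D1 L).
    rewrite -[e *m D1 L *m D1 (L + 1)]mulmxA DD1 mulmx0 lin0 addr0 chain1 => H.
    by rewrite linearB -H opprB [X in _ = X]addrC subrK.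
  have [x0 Hx0] := inj2 Hy (ltac:(rewrite Hpy; apply: cb_d)).
  set w := phi1 L e - phi2 L x0 - lin hvL (e *m D1 L).
  have Hw : dE L w = 0.
    rewrite /w addrAC linearB -Hpy -chain2 -Hx0 subrr //.
  have [x1 [Hx1 Hcb]] := surj2 Hw.
  exists (x0 + x1); split; first by rewrite mulmxDl Hx1 addr0 -Hx0.
  have -> : phi1 L e - phi2 L (x0 + x1) - lin hvL (e *m D1 L) = w - phi2 L x1.
    by rewrite /w linearD opprD addrA [RHS]addrAC.
  exact: Hcb.
have [rows Hrows'] := fin_all_exists Hrows.
pose fL : 'M[R]_(n1 L, n2 L) := \matrix_(k < n1 L) rows k.
have HfL k : delta_mx 0 k *m fL = rows k by rewrite -rowE rowK.
exists (upd f L fL), (upd hv L hvL); split.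
  move=> j Hj; case: (eqVneq L j) => [<-|ne].
    rewrite /C1 /C2 !upd_eq !(upd_neq _ _ (ne_succ L)); split => //.
    apply/row_matrixP => k; rewrite !rowE !mulmxA HfL.
    by case: (Hrows' k).
  have Hj' : L + 1 <= j by lia.
  have ne' : L != j + 1 by lia.
  rewrite /C1 /C2 !(upd_neq _ _ ne) !(upd_neq _ _ ne'); exact: HC.
move=> x; rewrite !upd_eq.
apply: (islin_ind (F := fun x => phi1 L x - phi2 L (x *m fL) - lin hvL (x *m D1 L))
                  (P := fun z => coboundary dE z)).
- apply: islin_B; first apply: islin_B; first exact: islin_linear.
    exact: (islin_mul _ (islin_linear _)).
  exact: (islin_mul _ (islin_lin _)).
- exact: cb0.
- by move=> u v; apply: cbD.
- by move=> a u; apply: cbZ.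
- by move=> k /=; rewrite HfL; case: (Hrows' k).
Qed.


Lemma QL_all L : exists f hv, forall j, L <= j -> C1 f j /\ C2 f hv j.
Proof.
have H : forall m : nat, QL (N1 + 1 - m%:Z).
  elim => [|m IH]; first by apply: QL_base; lia.
  apply: QL_step; have -> : N1 + 1 - m.+1%:Z + 1 = N1 + 1 - m%:Z by lia.
  exact: IH.
have [f [hv [Hf _]]] := H (absz (N1 + 1 - L)%R).
exists f, hv => j Hj; apply: Hf; lia.
Qed.

Section Cone.
Variables (f : forall j, 'M[R]_(n1 j, n2 j)) (hv : forall j, 'I_(n1 (j + 1)) -> E j) (L0 : int).
Hypothesis HC : forall j, L0 <= j -> C1 f j /\ C2 f hv j.

Definition cdim d := (n1 (d + 1) + n2 d)%N.
Definition DC d : 'M[R]_(cdim d, cdim (d + 1)) := block_mx (- D1 (d + 1)) (f (d + 1)) 0 (D2 d).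

Lemma DCDC d : L0 <= d + 1 -> DC d *m DC (d + 1) = 0.
Proof.
move=> Hd; have [H1 _] := HC Hd.
rewrite /DC mulmx_block !mulmx0 !mul0mx !addr0 !add0r mulNmx mulmxN opprK DD1 DD2.
by rewrite mulNmx H1 addNr block_mx0.
Qed.

Lemma cone_acyc d : L0 <= d -> forall w : 'rV[R]_(cdim (d + 1)), w *m DC (d + 1) = 0 ->
  exists u : 'rV[R]_(cdim d), w = u *m DC d.
Proof.
move=> Hd w Hw.
have [HC1 HC2] : C1 f (d + 1) /\ C2 f hv (d + 1) by apply: HC; lia.
have [_ HC2d] := HC Hd.
set x := lsubmx w; set z := rsubmx w.
have Ew : w = row_mx x z by rewrite hsubmxK.
move: Hw; rewrite Ew /DC mul_row_block !mulmx0 !addr0 -row_mx0.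
move=> /eq_row_mx [hx hz]; move: hx; rewrite mulmxN => /eqP; rewrite oppr_eq0 => /eqP hx.
have Hphix : coboundary dE (phi1 (d + 1 + 1) x).
  have := HC2 x; rewrite hx lin0 addr0.
  have -> : x *m f (d + 1 + 1) = - (z *m D2 (d + 1)) by apply/eqP; rewrite -addr_eq0 hz.
  rewrite linearN chain2 opprK => /(congr1 (fun t => t - dE (d + 1) (phi2 (d + 1) z))).
  rewrite addrK => ->; rewrite -linearB; exact: cb_d.
have [y Hy] := inj1 hx Hphix.
set v := z + y *m f (d + 1).
have Hv : v *m D2 (d + 1) = 0.
  by rewrite /v mulmxDl -mulmxA -HC1 mulmxA -Hy [LHS]addrC.
have Hpv : dE (d + 1) (phi2 (d + 1) v) = 0 by rewrite -chain2 Hv linear0.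
have [y0 [Hy0 Hcb0]] := surj1 Hpv.
have Hw2 : (v - y0 *m f (d + 1)) *m D2 (d + 1) = 0.
  by rewrite mulmxBl Hv -mulmxA -HC1 mulmxA Hy0 mul0mx subrr.
have Hcb2 : coboundary dE (phi2 (d + 1) (v - y0 *m f (d + 1))).
  have := HC2d y0; rewrite Hy0 lin0 addr0 => H.
  have -> : phi2 (d + 1) (v - y0 *m f (d + 1)) =
     (phi2 (d + 1) v - phi1 (d + 1) y0) + (phi1 (d + 1) y0 - phi2 (d + 1) (y0 *m f (d + 1))).
    by rewrite linearB addrA subrK.
  by rewrite H; apply: cbD => //; apply: cb_d.
have [z2 Hz2] := inj2 Hw2 Hcb2.
exists (row_mx (y0 - y) z2).
rewrite /DC mul_row_block mulmx0 addr0; congr row_mx.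
  by rewrite mulmxN mulmxBl Hy0 sub0r opprK Hy.
rewrite -Hz2 /v mulmxBl; set a := y0 *m f (d + 1); set b := y *m f (d + 1).
by rewrite [RHS]addrC [RHS]addrA subrK addrK.
Qed.

End Cone.

End Lift.

End H1.
Import H1.

Module H3.

Section Contr.
Variables (R : comNzRingType) (c : int -> nat) (DC : forall d, 'M[R]_(c d, c (d + 1))) (L0 N : int).
Hypothesis Hcx : forall d, L0 <= d -> DC (d + 1) *m DC (d + 1 + 1) = 0.
Hypothesis Hac : forall d, L0 <= d -> forall w : 'rV[R]_(c (d + 1)), w *m DC (d + 1) = 0 ->
  exists u, w = u *m DC d.
Hypothesis Hb : forall d, N < d -> c d = 0%N.

Definition IdS (S : forall d, 'M[R]_(c (d + 1), c d)) d :=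
  S d *m DC d + DC (d + 1) *m S (d + 1) = 1%:M.

Definition QS L := exists S, forall d, L <= d -> IdS S d.

Lemma QS_base L : N < L -> QS L.
Proof.
move=> HL; exists (fun d => 0) => d Hd.
have e : c (d + 1) = 0%N by apply: Hb; lia.
apply/matrixP => i; have := ltn_ord i; by rewrite {2}e.
Qed.

Lemma QS_step L : L0 <= L -> QS (L + 1) -> QS L.
Proof.
move=> HL [S HS].
have HI : IdS S (L + 1) by apply: HS.
have Hrows : forall k : 'I_(c (L + 1)), exists u : 'rV[R]_(c L),
    delta_mx 0 k - delta_mx 0 k *m DC (L + 1) *m S (L + 1) = u *m DC L.
  move=> k; apply: Hac => //.
  rewrite mulmxBl -!mulmxA.
  have -> : S (L + 1) *m DC (L + 1) = 1%:M - DC (L + 1 + 1) *m S (L + 1 + 1).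
    by rewrite -HI addrK.
  by rewrite mulmxBr mulmx1 [DC (L + 1) *m (_ *m _)]mulmxA Hcx // mul0mx subr0 subrr.
have [rows Hr] := fin_all_exists Hrows.
pose SL : 'M[R]_(c (L + 1), c L) := \matrix_(k < c (L + 1)) rows k.
exists (upd S L SL) => d Hd; case: (eqVneq L d) => [<-|ne].
  rewrite /IdS upd_eq (upd_neq _ _ (ne_succ L)).
  apply/row_matrixP => k; rewrite linearD /= !row_mul rowK row1 rowE -Hr.
  by rewrite subrK.

have ne' : L != d + 1 by lia.
rewrite /IdS !(upd_neq _ _ ne) !(upd_neq _ _ ne'); apply: HS; lia.
Qed.

Lemma contr_all : exists S : forall d, 'M[R]_(c (d + 1), c d), forall d, L0 <= d -> IdS S d.
Proof.
case: (ltrP N L0) => HN; first exact: QS_base.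
have H : forall m : nat, L0 <= N + 1 - m%:Z -> QS (N + 1 - m%:Z).
  elim => [|m IH] Hm; first by apply: QS_base; lia.
  apply: QS_step => //; have -> : N + 1 - m.+1%:Z + 1 = N + 1 - m%:Z by lia.
  by apply: IH; lia.
have [S HS] := H (absz (N + 1 - L0)%R) ltac:(lia).
exists S => d Hd; apply: HS; lia.
Qed.

End Contr.

End H3.
Import H3.

Module F.

Section Final.
Variables (R : comNzRingType).
Variables (n1 : int -> nat) (D1 : forall i : int, 'M[R]_(n1 i, n1 (i + 1))).
Variables (n2 : int -> nat) (D2 : forall i : int, 'M[R]_(n2 i, n2 (i + 1))).
Variables (f : forall j, 'M[R]_(n1 j, n2 j)).

Local Notation cdim := (cdim n1 n2).
Local Notation DC := (DC D1 D2 f).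
Variable S : forall d, 'M[R]_(cdim (d + 1), cdim d).

Definition edim d := (n1 d + n1 (d + 1))%N.
Definition DE d : 'M[R]_(edim d, edim (d + 1)) := block_mx 0 0 1%:M 0.
Definition SE d : 'M[R]_(edim (d + 1), edim d) := block_mx 0 1%:M 0 0.

Lemma DEDE d : DE d *m DE (d + 1) = 0.
Proof. by rewrite /DE; bsimp. Qed.

Lemma IdE d : SE d *m DE d + DE (d + 1) *m SE (d + 1) = 1%:M.
Proof. by rewrite /DE /SE; bsimp; rewrite -scalar_mx_block. Qed.

Definition DCyl d : 'M[R]_(n1 d + cdim d, n1 (d + 1) + cdim (d + 1)) :=
  block_mx (D1 d) 0 (col_mx (- 1%:M) 0) (DC d).
Definition DG1 d : 'M[R]_(n1 d + cdim d, n1 (d + 1) + cdim (d + 1)) :=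
  block_mx (D1 d) 0 0 (DC d).
Definition DG2 d : 'M[R]_(n2 d + edim d, n2 (d + 1) + edim (d + 1)) :=
  block_mx (D2 d) 0 0 (DE d).

Definition Lam j : 'M[R]_(n1 (j + 1) + cdim (j + 1)) :=
  block_mx 1%:M 0 (S j *m col_mx 1%:M 0) 1%:M.
Definition Lam' j : 'M[R]_(n1 (j + 1) + cdim (j + 1)) :=
  block_mx 1%:M 0 (- (S j *m col_mx 1%:M 0)) 1%:M.

Lemma LamK j : Lam j *m Lam' j = 1%:M.
Proof. by rewrite /Lam /Lam'; bsimp; rewrite addrN -scalar_mx_block. Qed.
Lemma LamK' j : Lam' j *m Lam j = 1%:M.
Proof. by rewrite /Lam /Lam'; bsimp; rewrite addNr -scalar_mx_block. Qed.

Lemma Lam_chain j : S j *m DC j + DC (j + 1) *m S (j + 1) = 1%:M ->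
  DCyl (j + 1) *m Lam (j + 1) = Lam j *m DG1 (j + 1).
Proof.
move=> HI.
have HI' : DC (j + 1) *m S (j + 1) = 1%:M - S j *m DC j by rewrite -HI [RHS]addrC addKr.
have E1 : DC j *m col_mx 1%:M 0 = - (col_mx 1%:M 0 *m D1 (j + 1)).
  by rewrite /H1.DC; bsimp; rewrite opp_col_mx oppr0.
rewrite /DCyl /Lam /DG1 !mulmx_block.
rewrite ?mulmx1 ?mul1mx ?mulmx0 ?mul0mx ?addr0 ?add0r; congr block_mx.
rewrite mulmxA HI' mulmxBl mul1mx -[S j *m DC j *m _]mulmxA E1 mulmxN opprK mulmxA addrA.
by rewrite add_col_mx addNr addr0 col_mx0 add0r.
Qed.


Definition Th d : 'M[R]_(n1 d + cdim d, n2 d + edim d) :=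
  block_mx (f d) (row_mx 1%:M (D1 d)) (col_mx 0 1%:M) (block_mx 0 (- 1%:M) 0 0).
Definition Th' d : 'M[R]_(n2 d + edim d, n1 d + cdim d) :=
  block_mx 0 (row_mx 0 1%:M) (col_mx 1%:M 0) (block_mx (D1 d) (- f d) (- 1%:M) 0).

Lemma ThK d : Th d *m Th' d = 1%:M.
Proof.
rewrite /Th /Th'; bsimp; rewrite !mulmxN !mulNmx !mulmx1 opprK !subrr.
rewrite [RHS](scalar_mx_block (n1 d)); congr block_mx; last by rewrite -scalar_mx_block.
by apply/matrixP => i j; rewrite !mxE; case: split => ?; rewrite mxE.
Qed.
Lemma ThK' d : Th' d *m Th d = 1%:M.
Proof.
rewrite /Th /Th'; bsimp; rewrite !mulmxN !mulNmx !mulmx1 opprK !subrr.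
rewrite [RHS](scalar_mx_block (n2 d)); congr block_mx; last by rewrite -scalar_mx_block.
by apply/matrixP => i j; rewrite !mxE; case: split => ?; rewrite mxE.
Qed.

Lemma Th_chain d : D1 d *m f (d + 1) = f d *m D2 d -> D1 d *m D1 (d + 1) = 0 ->
  DCyl d *m Th (d + 1) = Th d *m DG2 d.
Proof.
move=> HC HD; rewrite /DCyl /Th /DG2 /DE /H1.DC; bsimp.
rewrite !mulNmx !mulmxN !mul1mx !mulmx1 opprK addNr HD HC ?addNr.
congr block_mx; rewrite block_mxEv; congr col_mx.
by apply/matrixP => i j; rewrite !mxE; case: split => ?; rewrite mxE.
Qed.


Lemma core p r1 r2 x :
  (forall j, j = p \/ j = p + 1 -> S j *m DC j + DC (j + 1) *m S (j + 1) = 1%:M) ->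
  DC (p + 1) *m DC (p + 1 + 1) = 0 ->
  (forall j, j = p + 1 \/ j = p + 1 + 1 -> D1 j *m f (j + 1) = f j *m D2 j) ->
  (forall j, j = p + 1 \/ j = p + 1 + 1 -> D1 j *m D1 (j + 1) = 0) ->
  r1 + (cdim (p + 1 + 1))%:Z = r2 + (edim (p + 1 + 1))%:Z ->
  (MI r1 (block_mx (D1 (p + 1)) 0 0 (D1 (p + 1 + 1))) x <->
   MI r2 (block_mx (D2 (p + 1)) 0 0 (D2 (p + 1 + 1))) x).
Proof.
move=> HS HDC HC HD Er.
rewrite -(MI_contr _ _ HDC (HS (p + 1) (or_intror erefl))).
rewrite -(MI_iso (P0 := Lam p) (P1 := Lam (p + 1)) (P2 := Lam (p + 1 + 1))
   (Q0 := Lam' p) (Q1 := Lam' (p + 1)) (Q2 := Lam' (p + 1 + 1))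
   (Lam_chain (HS p (or_introl erefl))) (Lam_chain (HS (p + 1) (or_intror erefl)))
   (LamK' _) (LamK _) (LamK' _) (LamK _)).
rewrite (MI_iso (P0 := Th (p + 1)) (P1 := Th (p + 1 + 1)) (P2 := Th (p + 1 + 1 + 1))
   (Q0 := Th' (p + 1)) (Q1 := Th' (p + 1 + 1)) (Q2 := Th' (p + 1 + 1 + 1))
   (Th_chain (HC _ (or_introl erefl)) (HD _ (or_introl erefl)))
   (Th_chain (HC _ (or_intror erefl)) (HD _ (or_intror erefl)))
   (ThK' _) (ThK _) (ThK' _) (ThK _)).
rewrite Er.
exact: (MI_contr _ _ (DEDE _) (IdE _)).
Qed.

End Final.

End F.
Import F.

Module Main.

Lemma jump_conv (R : comNzRingType) (n : int -> nat) (D : forall i : int, 'M[R]_(n i, n (i + 1)))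
  (i k : int) x (q : int) : q + 1 = i ->
  (jump_ideal D i k x <-> minor_ideal ((n (q + 1))%:Z - k + 1) (block_mx (D q) 0 0 (D (q + 1))) x).
Proof.
move=> e; subst i; rewrite /jump_ideal /sum_diff.
have e : q + 1 - 1 = q by rewrite addrK.
move: e; generalize (q + 1 - 1) => t e; subst t.
by [].
Qed.


End Main.
Import Main.

Unset Implicit Arguments.
Theorem mainTheorem1 (R : comNzRingType) (HR : noetherian R)
  (E : int -> lmodType R) (dE : forall i : int, {linear E i -> E (i + 1)})
  (HEc : is_complex dE) (HEb : bounded_above E)
  (HEfg : forall i : int, fg_cohomology dE i)
  (n1 : int -> nat) (D1 : forall i : int, 'M[R]_(n1 i, n1 (i + 1)))
  (HF1c : is_complex (free_diff D1)) (HF1b : bounded_above (free_mod R n1))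
  (phi1 : forall i : int, {linear free_mod R n1 i -> E i})
  (Hphi1 : quasi_iso (free_diff D1) dE phi1)
  (n2 : int -> nat) (D2 : forall i : int, 'M[R]_(n2 i, n2 (i + 1)))
  (HF2c : is_complex (free_diff D2)) (HF2b : bounded_above (free_mod R n2))
  (phi2 : forall i : int, {linear free_mod R n2 i -> E i})
  (Hphi2 : quasi_iso (free_diff D2) dE phi2) :
  forall (i k : int) (x : R), jump_ideal D1 i k x <-> jump_ideal D2 i k x.
Proof.
move=> i k x.
have [N1 HN1] := HF1b; have [N2 HN2] := HF2b.
set p := i - 2.
have ei : p + 1 + 1 = i by rewrite /p; lia.
rewrite (jump_conv _ _ _ ei) (jump_conv _ _ _ ei) !minor_idealE.
have [f [hv Hf]] := QL_all HF1c Hphi1 Hphi2 HN1 (p - 3).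
have Hcx : forall d, p - 3 <= d -> DC D1 D2 f (d + 1) *m DC D1 D2 f (d + 1 + 1) = 0.
  move=> d Hd; apply: (DCDC HF1c HF2c Hf); lia.
have Hac : forall d, p - 3 <= d -> forall w : 'rV[R]_(cdim n1 n2 (d + 1)),
    w *m DC D1 D2 f (d + 1) = 0 -> exists u, w = u *m DC D1 D2 f d.
  move=> d Hd w Hw; exact: (cone_acyc Hphi1 Hphi2 Hf Hd Hw).
have Hb : forall d, Num.max N1 N2 < d -> cdim n1 n2 d = 0%N.
  move=> d Hd; rewrite /cdim.
  have -> : n1 (d + 1) = 0%N.
    by apply: rV0_n => y; apply: (HN1 (d + 1)); rewrite gt_max in Hd; lia.
  have -> : n2 d = 0%N.
    by apply: rV0_n => y; apply: (HN2 d); rewrite gt_max in Hd; lia.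
  by [].
have [S HS] := contr_all Hcx Hac Hb.
apply: (core (S := S)).
- by move=> j [->|->]; apply: HS; lia.
- by apply: Hcx; lia.
- move=> j Hj; have Hj' : p - 3 <= j by case: Hj => ->; lia.
  by case: (Hf j Hj').
- by move=> j [->|->]; apply: cx_DD.
- rewrite /cdim /edim !PoszD; ring.
Qed.
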